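(* Let $X$ be a Baire space and $(Z,d)$ a metric space. Let $f_n:X\to Z$ ($n\in\mathbb N$) be quasicontinuous mappings and $f:X\to Z$ a mapping. Suppose that for each $x\in X$, $f(x)$ is a cluster point of the sequence $(f_n(x))_{n\in\mathbb N}$, and that for each $x$ in a given dense Baire subspace $A$ of $X$, $(f_n(x))_{n\in\mathbb N}$ converges to $f(x)$. Then for each $x\in A$ the following are equivalent: (1) the sequence $(f_n)_{n\in\mathbb N}$ is equi-quasicontinuous at $x$; (2) $f$ is quasicontinuous at $x$.
   Context: A mapping $g:X\to Z$ is quasicontinuous at $a$ if for each neighborhood $U$ of $a$ and each neighborhood $W$ of $g(a)$ there is an open $O$ with $\emptyset\ne O\subset U$ and $g(O)\subset W$; quasicontinuous means at every point. A sequence $(f_n)$ of mappings $X\to Z$ is equi-quasicontinuous at $x\in X$ if for each neighborhood $U$ of $x$ and each $\varepsilon>0$ there are an open set $O\subset X$ with $\emptyset\ne O\subset U$ and $n_0\in\mathbb N$ such that $d(f_n(x),f_n(y))<\varepsilon$ for every $n\ge n_0$ and every $y\in O$. *)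

(* Defs.v *)
From Stdlib Require Import Reals.
Open Scope R_scope.

(* A topological space: a type with a family of open sets closed under
   finite intersections and arbitrary unions, containing the whole space
   (the empty set is the union of the empty family). *)
Record TopSpace := {
  carrier :> Type;
  is_open : (carrier -> Prop) -> Prop;
  open_full : is_open (fun _ => True);
  open_inter : forall U V, is_open U -> is_open V -> is_open (fun x => U x /\ V x);
  open_union : forall (I : Type) (F : I -> carrier -> Prop),
      (forall i, is_open (F i)) -> is_open (fun x => exists i, F i x)
}.

Record MetricSpace := {
  mcarrier :> Type;
  dist : mcarrier -> mcarrier -> R;
  dist_eq0 : forall x y, dist x y = 0 <-> x = y;
  dist_sym : forall x y, dist x y = dist y x;
  dist_tri : forall x y z, dist x z <= dist x y + dist y z
}.

Definition m_open {Z : MetricSpace} (W : Z -> Prop) : Prop :=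
  forall z, W z -> exists eps, 0 < eps /\ forall w, dist Z z w < eps -> W w.

Definition nbhd {X : TopSpace} (x : X) (U : X -> Prop) : Prop :=
  exists O, is_open X O /\ O x /\ forall y, O y -> U y.

Definition m_nbhd {Z : MetricSpace} (z : Z) (W : Z -> Prop) : Prop :=
  exists O, m_open O /\ O z /\ forall w, O w -> W w.

Definition quasicontinuous_at {X : TopSpace} {Z : MetricSpace}
  (g : X -> Z) (a : X) : Prop :=
  forall U W, nbhd a U -> m_nbhd (g a) W ->
    exists O, is_open X O /\ (exists y, O y) /\ (forall y, O y -> U y) /\
              (forall y, O y -> W (g y)).

Definition quasicontinuous {X : TopSpace} {Z : MetricSpace} (g : X -> Z) : Prop :=
  forall a, quasicontinuous_at g a.

Definition equi_quasicontinuous_at {X : TopSpace} {Z : MetricSpace}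
  (fs : nat -> X -> Z) (x : X) : Prop :=
  forall U eps, nbhd x U -> 0 < eps ->
    exists O n0, is_open X O /\ (exists y, O y) /\ (forall y, O y -> U y) /\
      forall n y, (n >= n0)%nat -> O y -> dist Z (fs n x) (fs n y) < eps.

Definition cluster_point {Z : MetricSpace} (u : nat -> Z) (z : Z) : Prop :=
  forall W N, m_nbhd z W -> exists n, (n >= N)%nat /\ W (u n).

Definition converges_to {Z : MetricSpace} (u : nat -> Z) (z : Z) : Prop :=
  forall W, m_nbhd z W -> exists N, forall n, (n >= N)%nat -> W (u n).

Definition dense {X : TopSpace} (A : X -> Prop) : Prop :=
  forall V, is_open X V -> (exists y, V y) -> exists y, V y /\ A y.

(* The subset A, with the subspace topology, is a Baire space: every
   countable family of relatively open, relatively dense subsets of A has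
   relatively dense intersection (in A). *)
Definition rel_open {X : TopSpace} (A G : X -> Prop) : Prop :=
  (forall x, G x -> A x) /\
  exists U, is_open X U /\ forall x, A x -> (G x <-> U x).

Definition rel_dense {X : TopSpace} (A G : X -> Prop) : Prop :=
  forall V, is_open X V -> (exists y, A y /\ V y) -> exists y, A y /\ V y /\ G y.

Definition baire_subspace {X : TopSpace} (A : X -> Prop) : Prop :=
  forall G : nat -> X -> Prop,
    (forall n, rel_open A (G n)) -> (forall n, rel_dense A (G n)) ->
    rel_dense A (fun x => forall n, G n x).

Definition baire_space (X : TopSpace) : Prop :=
  baire_subspace (fun _ : X => True).

(* Main.v *)
Require Import Defs.
From Stdlib Require Import Reals Lra Lia Classical.
Open Scope R_scope.

Lemma ball_nbhd (Z : MetricSpace) (z : Z) (e : R) :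
  0 < e -> m_nbhd z (fun w => Defs.dist Z z w < e).
Proof.
  intros He. exists (fun w => Defs.dist Z z w < e). split; [|split].
  - intros w Hw. exists (e - Defs.dist Z z w). split; [lra|].
    intros w' Hw'. pose proof (Defs.dist_tri Z z w w'). lra.
  - assert (Defs.dist Z z z = 0) by (apply Defs.dist_eq0; reflexivity). lra.
  - auto.
Qed.

Lemma nbhd_ball (Z : MetricSpace) (z : Z) W :
  m_nbhd z W -> exists r, 0 < r /\ forall w, Defs.dist Z z w < r -> W w.
Proof.
  intros [O [HO [Oz HW]]]. destruct (HO z Oz) as [r [Hr H]].
  exists r. split; auto.
Qed.

Lemma tri3 (Z : MetricSpace) (a b c d : Z) :
  Defs.dist Z a d <= Defs.dist Z a b + Defs.dist Z b c + Defs.dist Z c d.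
Proof.
  pose proof (Defs.dist_tri Z a b d). pose proof (Defs.dist_tri Z b c d). lra.
Qed.

Theorem theorem4p5 (X : TopSpace) (Z : MetricSpace)
  (fs : nat -> X -> Z) (f : X -> Z) (A : X -> Prop) :
  baire_space X ->
  (forall n, quasicontinuous (fs n)) ->
  (forall x, cluster_point (fun n => fs n x) (f x)) ->
  dense A -> baire_subspace A ->
  (forall x, A x -> converges_to (fun n => fs n x) (f x)) ->
  forall x, A x -> (equi_quasicontinuous_at fs x <-> quasicontinuous_at f x).
Proof.
  intros _ Hqc Hcl Hd Hb Hconv x Ax. split.
  - intros Heq U W HU HW.
    destruct (nbhd_ball _ _ _ HW) as [r [Hr HrW]].
    set (e := r / 4).
    assert (He : 0 < e) by (unfold e; lra).
    destruct (Hconv x Ax _ (ball_nbhd _ (f x) e He)) as [N HN].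
    destruct (Heq U e HU He) as [O [n0 [HO [Hne [HOU Hd0]]]]].
    exists O. split; [auto|split; [auto|split; [auto|]]].
    intros y Oy. apply HrW.
    destruct (Hcl y _ (Nat.max N n0) (ball_nbhd _ (f y) e He)) as [n [Hn Hy]].
    simpl in Hy.
    assert (h1 := HN n ltac:(lia)). simpl in h1.
    assert (h2 := Hd0 n y ltac:(lia) Oy).
    pose proof (tri3 Z (f x) (fs n x) (fs n y) (f y)).
    rewrite (Defs.dist_sym Z (fs n y) (f y)) in *. unfold e in *. lra.
  - intros Hf U eps HU Heps.
    set (e := eps / 8).
    assert (He : 0 < e) by (unfold e; lra).
    destruct (Hf U _ HU (ball_nbhd _ (f x) e He)) as [O1 [HO1 [Hne1 [HO1U HO1f]]]].
    destruct (Hconv x Ax _ (ball_nbhd _ (f x) e He)) as [N HN].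
    set (H := fun k y => forall n, (n >= k)%nat -> Defs.dist Z (f x) (fs n y) < 2 * e).
    assert (Hex : exists k V, is_open X V /\ (exists y, V y) /\ (forall z, V z -> O1 z) /\
              forall V', is_open X V' -> (exists y, V' y) -> (forall z, V' z -> V z) ->
                exists z, V' z /\ H k z).
    { apply NNPP. intro Hnot.
      set (G := fun k y => A y /\ exists V, is_open X V /\ V y /\
                   forall z, V z -> O1 z -> ~ H k z).
      assert (Gro : forall k, rel_open A (G k)).
      { intro k. split. { intros y [Ay _]; auto. }
        exists (fun y => exists V : {V : X -> Prop | is_open X V /\ forall z, V z -> O1 z -> ~ H k z}, proj1_sig V y).
        split.
        - apply (open_union X _ (fun V y => proj1_sig V y)). intros V. exact (proj1 (proj2_sig V)).
        - intros y Ay. split.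
          + intros [_ [V [HV [Vy HV']]]]. exists (exist _ V (conj HV HV')). exact Vy.
          + intros [[V [HV HV']] Vy]. split; auto. exists V. auto. }
      assert (Grd : forall k, rel_dense A (G k)).
      { intros k V HV [y0 [Ay0 Vy0]].
        destruct (classic (exists z, V z /\ O1 z)) as [HVO | HVO].
        - assert (HnotV : ~ (is_open X (fun z => V z /\ O1 z) /\ (exists y, V y /\ O1 y) /\
                   (forall z, V z /\ O1 z -> O1 z) /\
                   forall V', is_open X V' -> (exists y, V' y) -> (forall z, V' z -> V z /\ O1 z) ->
                     exists z, V' z /\ H k z)).
          { intro C. apply Hnot. exists k, (fun z => V z /\ O1 z). exact C. }
          assert (Hop : is_open X (fun z => V z /\ O1 z)) by (apply open_inter; auto).
          destruct (classic (exists V', is_open X V' /\ (exists y, V' y) /\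
                     (forall z, V' z -> V z /\ O1 z) /\ forall z, V' z -> ~ H k z))
            as [[V' [HV' [Hne' [Hsub Hdis]]]] | Hno].
          + destruct (Hd V' HV' Hne') as [y [V'y Ay]].
            exists y. destruct (Hsub y V'y). split; auto. split; auto.
            split; auto. exists V'. split; auto.
          + exfalso. apply HnotV. split; auto. split; auto. split; [tauto|].
            intros V' HV' Hne' Hsub. apply NNPP. intro C. apply Hno.
            exists V'. split; auto. split; auto. split; auto.
            intros z V'z Hz. apply C. exists z. auto.
        - exists y0. split; auto. split; auto. split; auto. exists V.
          split; auto. split; auto. intros z Vz O1z Hz. apply HVO. exists z; auto. }
      destruct (Hb G Gro Grd O1 HO1) as [y [Ay [O1y HG]]].
      { destruct Hne1 as [y Hy]. destruct (Hd O1 HO1 (ex_intro _ y Hy)) as [z [? ?]].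
        exists z. auto. }
      destruct (Hconv y Ay _ (ball_nbhd _ (f y) e He)) as [k Hk].
      destruct (HG k) as [_ [V [_ [Vy HV]]]].
      apply (HV y Vy O1y). intros n Hn. simpl in Hk. specialize (Hk n Hn).
      specialize (HO1f y O1y). simpl in HO1f.
      pose proof (Defs.dist_tri Z (f x) (f y) (fs n y)). lra. }
    destruct Hex as [k [V [HV [HneV [HVO1 HVd]]]]].
    exists V, (Nat.max k N). split; auto. split; auto. split.
    { intros z Vz. apply HO1U. auto. }
    intros n y Hn Vy.
    destruct (Hqc n y V _ (ex_intro _ V (conj HV (conj Vy (fun _ h => h))))
                (ball_nbhd _ (fs n y) e He)) as [O' [HO' [Hne' [HO'V HO'f]]]].
    destruct (HVd O' HO' Hne' HO'V) as [z [O'z Hz]].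
    assert (h1 := Hz n ltac:(lia)).
    assert (h2 := HO'f z O'z). simpl in h2.
    assert (h3 := HN n ltac:(lia)). simpl in h3.
    pose proof (tri3 Z (fs n x) (f x) (fs n z) (fs n y)).
    rewrite (Defs.dist_sym Z (fs n x) (f x)) in *.
    rewrite (Defs.dist_sym Z (fs n z) (fs n y)) in *. unfold e in *. lra.
Qed.
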